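(* Let $S$ be an instance of 3-Partition (with $n_1\ge\cdots\ge n_{3m}$), let $1\le k\le 3m$, let $i_1,\dots,i_{3m-k+1}$ be natural numbers and $W=\prod_{j=1}^{3m-k+1}(a_1b^{i_j}a_2)$. Suppose there is an index $J$ with $i_J=\max_j\{i_j\}=n_k$. Let $i'_1,\dots,i'_{3m-k}$ be the sequence $\langle i_j\rangle_j$ with the entry $i_J$ omitted, and $W'=\prod_{j=1}^{3m-k}(a_1b^{i'_j}a_2)$. Then for every string $T$ there is a computation $$W\,\|\,v_{4k-1}E_kv_{4k-1}\,v_{4k}F_kv_{4k}\,T\;\vdash^*\;W'\,\|\,T.$$
   Context: Queue automaton: a configuration is written $Q\,\|\,x$ ($Q$ = queue contents, $x$ = remaining input); a step from $Q\,\|\,\sigma x$ ($\sigma$ a symbol) goes either to $Q\sigma\,\|\,x$ (push) or, if $Q=\sigma Q'$, to $Q'\,\|\,x$ (match/pop). $\vdash^*$ is zero or more steps. An instance of 3-Partition is a sequence $S=\langle n_i:1\le i\le 3m\rangle$ of natural numbers such that $B=(\sum_{i=1}^{3m}n_i)/m$ is an integer and $B/4<n_i<B/2$ for all $i$; throughout, the $n_i$ are in non-increasing order. Alphabet $\{a_1,a_2,b,e_0,e,c_1,c_2,x,y\}$; $u^i$ is $i$ copies of $u$ concatenated, $\prod_{\ell=1}^k u_\ell=u_1\cdots u_k$. Define $U_\ell=a_1^2b^\ell a_2^2$, $v_\ell=c_1x^\ell y^\ell c_2$, $E_k=U_B^{3m-k}\,a_1b^{n_k}a_2\,U_B^{3m-k}$,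 $F_k=U_B^{2(3m-k)}$. *)

(* Defs.v *)
From mathcomp Require Import all_boot.
Set Implicit Arguments. Unset Strict Implicit. Unset Printing Implicit Defensive.

Inductive sym := a1 | a2 | sb | se0 | se | c1 | c2 | sx | sy.

Definition word := list sym.

(* A configuration Q || w : queue contents Q (front = head), remaining input w. *)
Definition config := (word * word)%type.

Inductive qstep : config -> config -> Prop :=
| qpush (Q : word) (s : sym) (w : word) : qstep (Q, s :: w) (Q ++ [:: s], w)
| qpop (Q : word) (s : sym) (w : word) : qstep (s :: Q, s :: w) (Q, w).

Inductive qsteps : config -> config -> Prop :=
| qsteps_refl c : qsteps c c
| qsteps_step c1 c2 c3 : qstep c1 c2 -> qsteps c2 c3 -> qsteps c1 c3.

Definition rep (i : nat) (u : word) : word := flatten (nseq i u).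

Definition Uw (l : nat) : word := [:: a1; a1] ++ nseq l sb ++ [:: a2; a2].
Definition vw (l : nat) : word := [:: c1] ++ nseq l sx ++ nseq l sy ++ [:: c2].

(* 3-Partition instance: S = <n_1..n_{3m}> (as a 0-indexed list),
   B = (sum n_i)/m an integer, B/4 < n_i < B/2, and n_i non-increasing. *)
Definition three_partition (m B : nat) (S : seq nat) : Prop :=
  [/\ 0 < m, size S = 3 * m, sumn S = m * B,
      all (fun n => (B < 4 * n) && (2 * n < B)) S
    & sorted geq S].

(* n_k for 1-based k *)
Definition nk (S : seq nat) (k : nat) : nat := nth 0 S k.-1.

Definition Ew (m B : nat) (S : seq nat) (k : nat) : word :=
  rep (3 * m - k) (Uw B) ++ [:: a1] ++ nseq (nk S k) sb ++ [:: a2]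
      ++ rep (3 * m - k) (Uw B).
Definition Fw (m B : nat) (k : nat) : word := rep (2 * (3 * m - k)) (Uw B).

Definition Wblocks (ns : seq nat) : word :=
  flatten (map (fun i => [:: a1] ++ nseq i sb ++ [:: a2]) ns).

(* sequence with the (0-indexed) entry J omitted *)
Definition omit_at (J : nat) (ns : seq nat) : seq nat := take J ns ++ drop J.+1 ns.

(* Main.v *)
Require Import Defs.
From mathcomp Require Import all_boot.
From mathcomp Require Import zify.
Set Implicit Arguments. Unset Strict Implicit.

Lemma qsteps_trans a b c : qsteps a b -> qsteps b c -> qsteps a c.
Proof. elim=> [//|x y z H _ IH] Hc; apply: qsteps_step H (IH Hc). Qed.

Definition proc (x p s : word) :=
  forall Q w, qsteps (p ++ Q, x ++ w) (Q ++ s, w).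

Lemma proc_nil : proc [::] [::] [::].
Proof. move=> Q w; rewrite cats0; exact: qsteps_refl. Qed.

Lemma proc_push c : proc [:: c] [::] [:: c].
Proof. move=> Q w; apply: qsteps_step (qpush _ _ _) (qsteps_refl _). Qed.

Lemma proc_pop c : proc [:: c] [:: c] [::].
Proof. move=> Q w; rewrite cats0; apply: qsteps_step (qpop _ _ _) (qsteps_refl _). Qed.

Lemma proc_cat x1 p1 s1 x2 p2 s2 :
  proc x1 p1 s1 -> proc x2 p2 s2 -> proc (x1 ++ x2) (p1 ++ p2) (s1 ++ s2).
Proof.
move=> H1 H2 Q w; rewrite -!catA.
apply: qsteps_trans (H1 (p2 ++ Q) (x2 ++ w)) _.
rewrite -catA; have := H2 (Q ++ s1) w; by rewrite -catA.
Qed.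

Lemma proc_eq x p s x' p' s' : x = x' -> p = p' -> s = s' -> proc x p s -> proc x' p' s'.
Proof. by move=> -> -> ->. Qed.

Lemma proc_pushw u : proc u [::] u.
Proof.
elim: u => [|c u IH]; first exact: proc_nil.
exact: (proc_cat (proc_push c) IH).
Qed.

Lemma proc_popw u : proc u u [::].
Proof.
elim: u => [|c u IH]; first exact: proc_nil.
exact: (proc_cat (proc_pop c) IH).
Qed.

Definition blk i : word := [:: a1] ++ nseq i sb ++ [:: a2].

Lemma nseqD (T : Type) n1 n2 (c : T) : nseq (n1 + n2) c = nseq n1 c ++ nseq n2 c.
Proof. by elim: n1 => //= n IH; rewrite IH. Qed.

Lemma U_pop B i : i <= B -> proc (Uw B) (blk i) (blk (B - i)).
Proof.
move=> hi.
have H := proc_cat (proc_pop a1) (proc_cat (proc_push a1)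
   (proc_cat (proc_popw (nseq i sb)) (proc_cat (proc_pushw (nseq (B - i) sb))
   (proc_cat (proc_pop a2) (proc_push a2))))).
apply: proc_eq H => //=.
by rewrite /Uw /= catA -nseqD subnKC.
Qed.

Lemma U_red B i : i <= B -> proc (Uw B) (blk (B - i)) (blk i).
Proof.
move=> hi.
have H := proc_cat (proc_push a1) (proc_cat (proc_pop a1)
   (proc_cat (proc_popw (nseq (B - i) sb)) (proc_cat (proc_pushw (nseq i sb))
   (proc_cat (proc_pop a2) (proc_push a2))))).
apply: proc_eq H => //=.
by rewrite /Uw /= catA -nseqD subnK.
Qed.

Lemma rep_add n1 n2 u : rep (n1 + n2) u = rep n1 u ++ rep n2 u.
Proof. by rewrite /rep nseqD flatten_cat. Qed.

Definition Rb B l := flatten (map (fun i => blk (B - i)) l).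

Lemma E_half B l : all (fun i => i <= B) l ->
  proc (rep (size l) (Uw B)) (Wblocks l) (Rb B l).
Proof.
elim: l => [|i l IH] /=; first by move=> _; exact: proc_nil.
case/andP=> hi hl; exact: (proc_cat (U_pop hi) (IH hl)).
Qed.

Lemma F_half B l : all (fun i => i <= B) l ->
  proc (rep (size l) (Uw B)) (Rb B l) (Wblocks l).
Proof.
elim: l => [|i l IH] /=; first by move=> _; exact: proc_nil.
case/andP=> hi hl; exact: (proc_cat (U_red hi) (IH hl)).
Qed.

Lemma Wblocks_cat l1 l2 : Wblocks (l1 ++ l2) = Wblocks l1 ++ Wblocks l2.
Proof. by rewrite /Wblocks map_cat flatten_cat. Qed.

Theorem lemma7 (m B : nat) (S : seq nat) (k : nat) (ns : seq nat) (J : nat) :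
  three_partition m B S ->
  1 <= k <= 3 * m ->
  size ns = 3 * m - k + 1 ->
  J < size ns ->
  nth 0 ns J = nk S k ->
  (forall j, j < size ns -> nth 0 ns j <= nth 0 ns J) ->
  forall T : word,
    qsteps (Wblocks ns,
            vw (4 * k - 1) ++ Ew m B S k ++ vw (4 * k - 1)
              ++ vw (4 * k) ++ Fw m B k ++ vw (4 * k) ++ T)
           (Wblocks (omit_at J ns), T).
Proof.
case=> hm hS _ hall _ /andP[hk1 hk2] hsz hJ hnJ hmax T.
have hnk : nk S k <= B.
  have : nk S k \in S by rewrite /nk mem_nth // hS; lia.
  by move/(allP hall)=> /= /andP[_]; lia.
have hns : all (fun i => i <= B) ns.
  apply/(all_nthP 0) => j hj; apply: leq_trans (hmax j hj) _; by rewrite hnJ.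
set l1 := take J ns; set l2 := drop J.+1 ns.
have hdec : ns = l1 ++ nk S k :: l2.
  by rewrite /l1 /l2 -hnJ -drop_nth // cat_take_drop.
have hl1 : all (fun i => i <= B) l1.
  apply/allP => x /mem_take; exact: (allP hns).
have hl2 : all (fun i => i <= B) l2.
  apply/allP => x /mem_drop; exact: (allP hns).
have s1 : size l1 = J by rewrite /l1 size_take hJ.
have s2 : size l2 = 3 * m - k - J by rewrite /l2 size_drop hsz; lia.
set v := vw (4 * k - 1); set v' := vw (4 * k).
set R := Rb B l1 ++ rep (size l2) (Uw B) ++ Rb B l2 ++ rep (size l1) (Uw B).
have hE : proc (Ew m B S k) (Wblocks ns) R.
  have H := proc_cat (proc_cat (E_half hl1) (proc_pushw (rep (size l2) (Uw B))))
     (proc_cat (proc_popw (blk (nk S k)))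
        (proc_cat (E_half hl2) (proc_pushw (rep (size l1) (Uw B))))).
  apply: proc_eq H.
  - rewrite /Ew -!rep_add -!catA s1 s2.
    have -> : J + (3 * m - k - J) = 3 * m - k by lia.
    by have -> : 3 * m - k - J + J = 3 * m - k by lia.
  - by rewrite !cats0 [in RHS]hdec Wblocks_cat.
  - by rewrite /R cat0s -!catA.
have hF : proc (Fw m B k) R (Wblocks (omit_at J ns)).
  have H := proc_cat (F_half hl1) (proc_cat (proc_popw (rep (size l2) (Uw B)))
     (proc_cat (F_half hl2) (proc_popw (rep (size l1) (Uw B))))).
  apply: proc_eq H.
  - rewrite /Fw -!rep_add s1 s2.
    by have -> : J + (3 * m - k - J + (3 * m - k - J + J)) = 2 * (3 * m - k) by lia.
  - by [].
  - by rewrite /omit_at Wblocks_cat cats0.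
set rest := Ew m B S k ++ v ++ v' ++ Fw m B k ++ v' ++ T.
have H1 := proc_pushw v (Wblocks ns) rest; rewrite cat0s in H1.
apply: qsteps_trans H1 _.
have H2 := hE v (v ++ v' ++ Fw m B k ++ v' ++ T).
apply: qsteps_trans H2 _.
have H3 := proc_popw v R (v' ++ Fw m B k ++ v' ++ T); rewrite cats0 in H3.
apply: qsteps_trans H3 _.
have H4 := proc_pushw v' R (Fw m B k ++ v' ++ T); rewrite cat0s in H4.
apply: qsteps_trans H4 _.
have H5 := hF v' (v' ++ T).
apply: qsteps_trans H5 _.
have := proc_popw v' (Wblocks (omit_at J ns)) T; by rewrite cats0.
Qed.
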